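(* Let $\mathcal{A}*\mathcal{X}=\mathcal{B}$ be a consistent tensor system with unique solution $\mathcal{X}^*$, where $\mathcal{A}\in\mathbb{R}^{n_1\times n_2\times n}$, $\mathcal{B}\in\mathbb{R}^{n_1\times n_3\times n}$, $n\ge 2$, and let $2\le s<n$ with $s$ dividing $n$. Let $\alpha>0$ and $$\kappa(s)=\max_{i=1,\dots,n/s}\|\mathcal{I}-\alpha(\tilde{\mathcal{A}}^s_i)^T*\tilde{\mathcal{A}}^s_i\|_{op},\qquad \mu(s)=\max_{i,j\in\{1,\dots,n/s\},\,i\neq j}\|(\tilde{\mathcal{A}}^s_i)^T*\tilde{\mathcal{A}}^s_j\|_{op}.$$ If $\kappa(s)+\alpha\mu(s)(n/s-1)<1$, then the iterates of block cyclic frontal slice descent with block size $s$ and learning rate $\alpha$ satisfy $\lim_{t\to\infty}\mathcal{E}(t)=0$, where $\mathcal{E}(t)=\|\mathcal{X}(t)-\mathcal{X}^*\|_F^2$.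
   Context: For $\mathcal{A}\in\mathbb{R}^{n_1\times n_2\times n}$ with frontal slices $A_k=\mathcal{A}(:,:,k)$: $\mathrm{unfold}(\mathcal{A})$ stacks $A_1,\dots,A_n$ vertically, $\mathrm{fold}$ is its inverse, $\mathrm{bcirc}(\mathcal{A})$ is the $n_1n\times n_2n$ block-circulant matrix with $(p,q)$ block $A_{((p-q)\bmod n)+1}$, and $\mathcal{A}*\mathcal{X}=\mathrm{fold}(\mathrm{bcirc}(\mathcal{A})\mathrm{unfold}(\mathcal{X}))$. $\mathcal{I}$ is the identity tensor (first frontal slice the identity matrix, others zero). $\mathcal{A}^T$ transposes each frontal slice and reverses the order of slices $2,\dots,n$. $\|\cdot\|_F$ is the Frobenius norm and $\|\mathcal{C}\|_{op}=\sup_{\|\mathcal{X}\|_F=1}\|\mathcal{C}*\mathcal{X}\|_F=\|\mathrm{bcirc}(\mathcal{C})\|_2$. For $k\in\{1,\dots,n\}$, $\tilde{\mathcal{A}}_k$ has $k$-th frontal slice $A_k$ and zeros elsewhere, and $\tilde{\mathcal{A}}^s_i=\sum_{k=(i-1)s+1}^{is}\tilde{\mathcal{A}}_k$ for $i=1,\dots,n/s$. Block cyclic frontal slice descent: set $\mathcal{X}(t)=0$ for $t\le 0$; for $t=0,1,2,\dots$ let $\mathcal{R}(t+1)=\mathcal{B}-\sum_{j=0}^{n/s-1}\tilde{\mathcal{A}}^s_{((t-j)\bmod n/s)+1}*\mathcal{X}(t-j)$ and $\mathcal{X}(t+1)=\mathcal{X}(t)+\alpha(\tilde{\mathcal{A}}^s_{(t\bmod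 n/s)+1})^T*\mathcal{R}(t+1)$. *)

(* Defs.v *)
From HB Require Import structures.
From mathcomp Require Import all_boot all_order all_algebra.
From mathcomp Require Import all_classical all_reals all_analysis.
Set Implicit Arguments. Unset Strict Implicit. Unset Printing Implicit Defensive.
Import Order.TTheory GRing.Theory Num.Theory.
Local Open Scope ring_scope.

(* A third-order tensor in R^{n1 x n2 x n}, given by its n frontal slices.
   Frontal slices are indexed 0..n-1 (the paper's k-th slice is index k-1). *)
Definition tensor (R : realType) (n1 n2 n : nat) := 'I_n -> 'M[R]_(n1, n2).

Section Tensors.
Variable R : realType.
Variable n : nat.

Definition ord_subn (k j : 'I_n) : 'I_n := insubd k ((k + n - j) %% n)%N.
Definition ord_rev (k : 'I_n) : 'I_n := insubd k ((n - k) %% n)%N.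

(* t-product: A * X = fold(bcirc(A) unfold(X)); the block row k of
   bcirc(A) unfold(X) is sum_j A_{((k-j) mod n)} X_j. *)
Definition tprod n1 n2 n3 (A : tensor R n1 n2 n) (X : tensor R n2 n3 n)
  : tensor R n1 n3 n :=
  fun k => \sum_(j < n) A (ord_subn k j) *m X j.

Definition ttr n1 n2 (A : tensor R n1 n2 n) : tensor R n2 n1 n :=
  fun k => (A (ord_rev k))^T.

Definition tid m : tensor R m m n :=
  fun k => if (k : nat) == 0%N then 1%:M else 0.

Definition tadd n1 n2 (A B : tensor R n1 n2 n) : tensor R n1 n2 n :=
  fun k => A k + B k.
Definition tsub n1 n2 (A B : tensor R n1 n2 n) : tensor R n1 n2 n :=
  fun k => A k - B k.
Definition tscale n1 n2 (a : R) (A : tensor R n1 n2 n) : tensor R n1 n2 n :=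
  fun k => a *: A k.
Definition tzero n1 n2 : tensor R n1 n2 n := fun _ => 0.

Definition frob n1 n2 (A : tensor R n1 n2 n) : R :=
  Num.sqrt (\sum_(k < n) \sum_(i < n1) \sum_(j < n2) (A k i j) ^+ 2).

Definition opnorm m1 m2 (C : tensor R m1 m2 n) : R :=
  sup [set r : R | exists m (X : tensor R m2 m n),
                     frob X = 1 /\ r = frob (tprod C X)].

Definition tslice n1 n2 (A : tensor R n1 n2 n) (k : 'I_n) : tensor R n1 n2 n :=
  fun l => if l == k then A l else 0.

(* \tilde A^s_i (0-indexed block i = paper's block i+1):
   sum of \tilde A_k over k = i*s, ..., i*s + s - 1 *)
Definition tblock n1 n2 (A : tensor R n1 n2 n) (s i : nat) : tensor R n1 n2 n :=
  fun l => \sum_(k < n | (i * s <= k < i * s + s)%N) tslice A k l.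

Definition kappa n1 n2 (A : tensor R n1 n2 n) (s : nat) (alpha : R) : R :=
  \big[Num.max/0]_(i < n %/ s)
     opnorm (tsub (tid n2) (tscale alpha (tprod (ttr (tblock A s i)) (tblock A s i)))).

Definition mu n1 n2 (A : tensor R n1 n2 n) (s : nat) : R :=
  \big[Num.max/0]_(i < n %/ s) \big[Num.max/0]_(j < n %/ s | i != j)
     opnorm (tprod (ttr (tblock A s i)) (tblock A s j)).

(* X : nat -> tensor is the sequence of iterates of block cyclic frontal
   slice descent, with X(t) = 0 for t <= 0 (so terms X(t-j) with j > t vanish).
   Block index ((t-j) mod n/s)+1 of the paper is (t-j) mod (n/s) here. *)
Definition bcfsd_resid n1 n2 n3 (A : tensor R n1 n2 n) (B : tensor R n1 n3 n)
  (s : nat) (X : nat -> tensor R n2 n3 n) (t : nat) : tensor R n1 n3 n :=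
  tsub B (fun k => \sum_(j < n %/ s | (j <= t)%N)
                     tprod (tblock A s ((t - j) %% (n %/ s))) (X (t - j)%N) k).

Definition bcfsd_iterates n1 n2 n3 (A : tensor R n1 n2 n) (B : tensor R n1 n3 n)
  (s : nat) (alpha : R) (X : nat -> tensor R n2 n3 n) : Prop :=
  X 0%N = tzero n2 n3 /\
  forall t : nat,
    X t.+1 = tadd (X t) (tscale alpha
               (tprod (ttr (tblock A s (t %% (n %/ s)))) (bcfsd_resid A B s X t))).

End Tensors.

(* Main.v *)
Require Import Defs.
From HB Require Import structures.
From mathcomp Require Import all_boot all_order all_algebra.
From mathcomp Require Import all_classical all_reals all_analysis.
From mathcomp Require Import zify ring lra.
Import Order.TTheory GRing.Theory Num.Theory numFieldNormedType.Exports.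
Local Open Scope classical_set_scope.
Local Open Scope ring_scope.
Set Implicit Arguments. Unset Strict Implicit. Unset Printing Implicit Defensive.
Lemma fadd (T : Type) (M : zmodType) (f g : T -> M) x : (f + g) x = f x + g x.
Proof. by []. Qed.
Lemma fopp (T : Type) (M : zmodType) (f : T -> M) x : (- f) x = - f x.
Proof. by []. Qed.
Lemma fzero (T : Type) (M : zmodType) x : (0 : T -> M) x = 0.
Proof. by []. Qed.
Lemma fscale (T : Type) (K : ringType) (M : lmodType K) (c : K) (f : T -> M) x : (c *: f) x = c *: f x.
Proof. by []. Qed.
Lemma fsum (T : Type) (M : zmodType) (J : Type) (r : seq J) (P : pred J) (F : J -> T -> M) x :
  (\sum_(j <- r | P j) F j) x = \sum_(j <- r | P j) F j x.
Proof. by rewrite fct_sumE. Qed.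
Section Nrm.
Variable R : realType.
Variable I : finType.
Definition nrm (a : I -> R) := Num.sqrt (\sum_i a i ^+ 2).

Lemma sumsq_ge0 (a : I -> R) : 0 <= \sum_i a i ^+ 2.
Proof. by apply: sumr_ge0 => i _; exact: sqr_ge0. Qed.

Lemma nrm_ge0 a : 0 <= nrm a.
Proof. exact: sqrtr_ge0. Qed.

Lemma sq_nrm a : nrm a ^+ 2 = \sum_i a i ^+ 2.
Proof. by rewrite sqr_sqrtr // sumsq_ge0. Qed.

Lemma CS (a b : I -> R) :
  (\sum_i a i * b i) ^+ 2 <= (\sum_i a i ^+ 2) * (\sum_i b i ^+ 2).
Proof.
set A := \sum_i a i ^+ 2; set B := \sum_i b i ^+ 2; set C := \sum_i a i * b i.
have A0 : 0 <= A by exact: sumsq_ge0.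
have B0 : 0 <= B by exact: sumsq_ge0.
have [Ae0|Apos] := eqVneq A 0.
  have a0 : forall i, a i = 0.
    move=> i; apply/eqP; rewrite -sqrf_eq0; apply/eqP.
    have := @psumr_eq0P R I xpredT (fun j => a j ^+ 2) (fun j _ => sqr_ge0 (a j)) Ae0.
    by apply.
  have -> : C = 0 by rewrite /C big1 // => i _; rewrite a0 mul0r.
  by rewrite expr0n /= mulr_ge0.
have Ap : 0 < A by rewrite lt0r Apos A0.
set x := - C / A.
have h : 0 <= \sum_i (x * a i + b i) ^+ 2 by exact: sumsq_ge0.
have e : \sum_i (x * a i + b i) ^+ 2 = x ^+ 2 * A + 2 * x * C + B.
  rewrite /A /B /C mulr_sumr mulr_sumr -!big_split /=; apply: eq_bigr => i _; ring.
rewrite e in h.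
have xA : x * A = - C by rewrite /x mulfVK.
have h2 : 0 <= A * (x ^+ 2 * A + 2 * x * C + B) by apply: mulr_ge0.
have e2 : A * (x ^+ 2 * A + 2 * x * C + B) = (x * A) ^+ 2 + 2 * (x * A) * C + A * B by ring.
rewrite e2 xA in h2.
nra.
Qed.

Lemma nrm_triangle (a b : I -> R) : nrm (a + b) <= nrm a + nrm b.
Proof.
have ha := nrm_ge0 a; have hb := nrm_ge0 b.
rewrite -(ler_sqr (nrm_ge0 _)); last by rewrite nnegrE addr_ge0.
have hC : \sum_i a i * b i <= nrm a * nrm b.
  apply: le_trans (ler_norm _) _.
  rewrite -(ler_sqr _); [|by rewrite nnegrE|by rewrite nnegrE mulr_ge0].
  by rewrite real_normK ?num_real // exprMn !sq_nrm CS.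
rewrite sq_nrm sqrrD !sq_nrm.
have -> : \sum_i (a + b) i ^+ 2 = \sum_i a i ^+ 2 + 2 * \sum_i a i * b i + \sum_i b i ^+ 2.
  rewrite mulr_sumr -!big_split /=; apply: eq_bigr => i _.
  change ((a + b) i) with (a i + b i); ring.
rewrite -mulr_natr; nra.
Qed.

Lemma nrm0 : nrm 0 = 0.
Proof. by rewrite /nrm big1 ?sqrtr0 // => i _; rewrite expr0n. Qed.

Lemma nrm_scale c (a : I -> R) : nrm (fun i => c * a i) = `|c| * nrm a.
Proof.
rewrite /nrm -sqrtr_sqr -sqrtrM ?sqr_ge0 // mulr_sumr; congr Num.sqrt.
by apply: eq_bigr => i _; rewrite exprMn.
Qed.

Lemma nrm_opp (a : I -> R) : nrm (fun i => - a i) = nrm a.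
Proof. by rewrite /nrm; congr Num.sqrt; apply: eq_bigr => i _; rewrite sqrrN. Qed.

Lemma nrm_eq0 (a : I -> R) : nrm a = 0 -> forall i, a i = 0.
Proof.
move=> h i; apply/eqP; rewrite -sqrf_eq0; apply/eqP.
have e : \sum_i a i ^+ 2 = 0 by rewrite -sq_nrm h expr0n.
have := @psumr_eq0P R I xpredT (fun j => a j ^+ 2) (fun j _ => sqr_ge0 (a j)) e.
by apply.
Qed.

Lemma nrm_entry (a : I -> R) i : `|a i| <= nrm a.
Proof.
rewrite -(ler_sqr _) ?nnegrE ?nrm_ge0 // real_normK ?num_real // sq_nrm.
by rewrite (bigD1 i) //= lerDl sumr_ge0 // => j _; exact: sqr_ge0.
Qed.

End Nrm.
Section T1.
Variable R : realType.
Variable n : nat.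
Local Notation tens n1 n2 := (tensor R n1 n2 n).

Definition tv {n1 n2} (X : tens n1 n2) := fun q : 'I_n * ('I_n1 * 'I_n2) => X q.1 q.2.1 q.2.2.

Lemma frobE n1 n2 (X : tens n1 n2) : frob X = nrm (tv X).
Proof.
rewrite /frob /nrm; congr Num.sqrt.
under eq_bigr => k _ do rewrite pair_bigA.
by rewrite pair_bigA.
Qed.

Lemma frob_ge0 n1 n2 (X : tens n1 n2) : 0 <= frob X.
Proof. by rewrite frobE nrm_ge0. Qed.

Lemma frob_add n1 n2 (X Y : tens n1 n2) : frob (X + Y) <= frob X + frob Y.
Proof.
rewrite !frobE; have -> : tv (X + Y) = tv X + tv Y.
  by apply/funext => q; rewrite /tv /= mxE.
exact: nrm_triangle.
Qed.

Lemma frob0 n1 n2 : frob (0 : tens n1 n2) = 0.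
Proof.
rewrite frobE; have -> : tv (0 : tens n1 n2) = 0.
  by apply/funext => q; rewrite /tv /= mxE.
exact: nrm0.
Qed.

Lemma frob_scale n1 n2 c (X : tens n1 n2) : frob (c *: X) = `|c| * frob X.
Proof.
rewrite !frobE -nrm_scale; congr nrm; apply/funext => q; by rewrite /tv /= mxE.
Qed.

Lemma frob_opp n1 n2 (X : tens n1 n2) : frob (- X) = frob X.
Proof.
rewrite !frobE -[in RHS]nrm_opp; congr nrm; apply/funext => q; by rewrite /tv /= mxE.
Qed.

Lemma frob_sum n1 n2 (J : finType) (P : pred J) (F : J -> tens n1 n2) :
  frob (\sum_(j | P j) F j) <= \sum_(j | P j) frob (F j).
Proof.
apply: (big_ind2 (fun (x : tens n1 n2) (y : R) => frob x <= y)).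
- by rewrite frob0.
- move=> x1 x2 y1 y2 h1 h2; apply: le_trans (frob_add _ _) _; exact: lerD.
- by [].
Qed.

Lemma frob_eq0 n1 n2 (X : tens n1 n2) : frob X = 0 -> X = 0.
Proof.
rewrite frobE => /nrm_eq0 h; apply/funext => k; apply/matrixP => i j.
by have := h (k, (i, j)); rewrite /tv /= mxE.
Qed.

Lemma tprodDr n1 n2 n3 (A : tens n1 n2) (X Y : tens n2 n3) :
  tprod A (X + Y) = tprod A X + tprod A Y.
Proof. apply/funext => k; rewrite /tprod fadd -big_split /=; apply: eq_bigr => j _; by rewrite ?fadd ?fscale mulmxDr. Qed.

Lemma tprodZr n1 n2 n3 (A : tens n1 n2) c (X : tens n2 n3) :
  tprod A (c *: X) = c *: tprod A X.
Proof. apply/funext => k; rewrite /tprod fscale scaler_sumr; apply: eq_bigr => j _; by rewrite ?fadd ?fscale scalemxAr. Qed.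

Lemma tprodNr n1 n2 n3 (A : tens n1 n2) (X : tens n2 n3) :
  tprod A (- X) = - tprod A X.
Proof. by rewrite -scaleN1r tprodZr scaleN1r. Qed.

Lemma tprodBr n1 n2 n3 (A : tens n1 n2) (X Y : tens n2 n3) :
  tprod A (X - Y) = tprod A X - tprod A Y.
Proof. by rewrite tprodDr tprodNr. Qed.

Lemma tprod0r n1 n2 n3 (A : tens n1 n2) : tprod A (0 : tens n2 n3) = 0.
Proof. apply/funext => k; rewrite /tprod fzero big1 // => j _; exact: mulmx0. Qed.

Lemma tprodDl n1 n2 n3 (A B : tens n1 n2) (X : tens n2 n3) :
  tprod (A + B) X = tprod A X + tprod B X.
Proof. apply/funext => k; rewrite /tprod fadd -big_split /=; apply: eq_bigr => j _; by rewrite ?fadd ?fscale mulmxDl. Qed.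

Lemma tprodZl n1 n2 n3 (A : tens n1 n2) c (X : tens n2 n3) :
  tprod (c *: A) X = c *: tprod A X.
Proof. apply/funext => k; rewrite /tprod fscale scaler_sumr; apply: eq_bigr => j _; by rewrite ?fadd ?fscale scalemxAl. Qed.

Lemma tprodNl n1 n2 n3 (A : tens n1 n2) (X : tens n2 n3) :
  tprod (- A) X = - tprod A X.
Proof. by rewrite -scaleN1r tprodZl scaleN1r. Qed.

Lemma tprodBl n1 n2 n3 (A B : tens n1 n2) (X : tens n2 n3) :
  tprod (A - B) X = tprod A X - tprod B X.
Proof. by rewrite tprodDl tprodNl. Qed.

Lemma tprod0l n1 n2 n3 (X : tens n2 n3) : tprod (0 : tens n1 n2) X = 0.
Proof. apply/funext => k; rewrite /tprod fzero big1 // => j _; exact: mul0mx. Qed.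

Lemma tprod_sumr n1 n2 n3 (J : finType) (P : pred J) (A : tens n1 n2) (F : J -> tens n2 n3) :
  tprod A (\sum_(j | P j) F j) = \sum_(j | P j) tprod A (F j).
Proof.
apply: (big_ind2 (fun (x : tens n2 n3) (y : tens n1 n3) => tprod A x = y)).
- exact: tprod0r.
- by move=> x1 x2 y1 y2 <- <-; rewrite tprodDr.
- by [].
Qed.

Lemma tprod_suml n1 n2 n3 (J : finType) (P : pred J) (F : J -> tens n1 n2) (X : tens n2 n3) :
  tprod (\sum_(j | P j) F j) X = \sum_(j | P j) tprod (F j) X.
Proof.
apply: (big_ind2 (fun (x : tens n1 n2) (y : tens n1 n3) => tprod x X = y)).
- exact: tprod0l.
- by move=> x1 x2 y1 y2 <- <-; rewrite tprodDl.
- by [].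
Qed.

End T1.
Section T2.
Variable R : realType.
Variable n : nat.
Local Notation tens n1 n2 := (tensor R n1 n2 n).

Definition akC {m1 m2} (C : tens m1 m2) (k : 'I_n) (i : 'I_m1) : R :=
  \sum_(l < n) \sum_(p < m2) C (ord_subn k l) i p ^+ 2.

Lemma tprod_entry m1 m2 m (C : tens m1 m2) (X : tens m2 m) k i j :
  (tprod C X k i j) ^+ 2 <= akC C k i * \sum_(l < n) \sum_(p < m2) X l p j ^+ 2.
Proof.
rewrite /tprod /akC summxE.
under eq_bigr => l _ do rewrite mxE.
rewrite pair_bigA /= pair_bigA /= pair_bigA /=.
exact: (CS (fun q : 'I_n * 'I_m2 => C (ord_subn k q.1) i q.2) (fun q => X q.1 q.2 j)).
Qed.

Definition KC {m1 m2} (C : tens m1 m2) := \sum_(k < n) \sum_(i < m1) akC C k i.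

Lemma KC_ge0 m1 m2 (C : tens m1 m2) : 0 <= KC C.
Proof. by apply: sumr_ge0 => k _; apply: sumr_ge0 => i _; apply: sumr_ge0 => l _; exact: sumsq_ge0. Qed.

Lemma tprod_bound m1 m2 m (C : tens m1 m2) (X : tens m2 m) :
  frob (tprod C X) <= Num.sqrt (KC C) * frob X.
Proof.
rewrite -(ler_sqr _); [|by rewrite nnegrE frob_ge0|by rewrite nnegrE mulr_ge0 ?sqrtr_ge0 ?frob_ge0].
rewrite exprMn (sqr_sqrtr (KC_ge0 C)).
have sqf : forall a b (Y : tens a b), frob Y ^+ 2 = \sum_(k < n) \sum_(i < a) \sum_(j < b) Y k i j ^+ 2.
  move=> a b Y; rewrite sqr_sqrtr //; apply: sumr_ge0 => k _; apply: sumr_ge0 => i _; exact: sumsq_ge0.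
have -> : frob X ^+ 2 = \sum_(j < m) \sum_(l < n) \sum_(p < m2) X l p j ^+ 2.
  rewrite sqf [RHS]exchange_big /=; apply: eq_bigr => l _; rewrite [RHS]exchange_big //.
rewrite sqf /KC mulr_suml; apply: ler_sum => k _; rewrite mulr_suml; apply: ler_sum => i _.
rewrite mulr_sumr; apply: ler_sum => j _; exact: tprod_entry.
Qed.

Lemma opnorm_bound m1 m2 m (C : tens m1 m2) (Y : tens m2 m) :
  frob (tprod C Y) <= opnorm C * frob Y.
Proof.
have [f0|fn0] := eqVneq (frob Y) 0.
  by rewrite (frob_eq0 f0) tprod0r !frob0 mulr0.
have fp : 0 < frob Y by rewrite lt0r fn0 frob_ge0.
set Y' := (frob Y)^-1 *: Y.
have fY' : frob Y' = 1 by rewrite frob_scale ger0_norm ?invr_ge0 ?frob_ge0 // mulVf.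
have inS : [set r : R | exists m (X : tens m2 m), frob X = 1 /\ r = frob (tprod C X)] (frob (tprod C Y')).
  by exists m, Y'.
have hS : has_sup [set r : R | exists m (X : tens m2 m), frob X = 1 /\ r = frob (tprod C X)].
  split; first by exists (frob (tprod C Y')).
  exists (Num.sqrt (KC C)) => r [m' [X [hX ->]]].
  by apply: le_trans (tprod_bound C X) _; rewrite hX mulr1.
have := sup_upper_bound hS inS.
rewrite /Y' tprodZr frob_scale ger0_norm ?invr_ge0 ?frob_ge0 // => h.
by rewrite -ler_pdivrMr // mulrC.
Qed.

End T2.
Section T3.
Variable R : realType.
Variable n' : nat.
Local Notation n := n'.+1.
Local Notation tens n1 n2 := (tensor R n1 n2 n).

Lemma ord_subnE (k j : 'I_n) : ord_subn k j = k - j.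
Proof.
apply: val_inj; rewrite /ord_subn val_insubd ltn_pmod //=.
by rewrite modnDmr addnBA // ltnW.
Qed.

Lemma tid_l m m3 (X : tens m m3) : tprod (tid R m) X = X.
Proof.
apply/funext => k; rewrite /tprod (bigD1 k) //= big1.
  by rewrite ord_subnE subrr /tid /= mul1mx addr0.
move=> j hj; rewrite ord_subnE /tid.
have -> : ((k - j : 'I_n) == 0 :> nat) = false.
  apply/negbTE; rewrite -[_ == _]/((k - j) == 0) subr_eq0 eq_sym; exact: hj.
exact: mul0mx.
Qed.

Lemma tprodA m1 m2 m3 m4 (A : tens m1 m2) (B : tens m2 m3) (X : tens m3 m4) :
  tprod A (tprod B X) = tprod (tprod A B) X.
Proof.
apply/funext => k; rewrite /tprod.
under eq_bigr => j _ do rewrite mulmx_sumr.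
rewrite exchange_big /=; apply: eq_bigr => l _.
rewrite mulmx_suml; rewrite (reindex_inj (h := fun j => j + l)) /=; last exact: addIr.
apply: eq_bigr => j _; rewrite mulmxA !ord_subnE.
by rewrite addrK opprD addrA addrAC.
Qed.

End T3.
Section Rec.
Variable R : realType.

Lemma rec_conv (m' : nat) (g : nat -> R) (k c : R) :
  0 <= k -> 0 <= c -> k + c * m'%:R < 1 -> (forall u, 0 <= g u) ->
  (forall u, (m'.+1 <= u)%N -> g u.+1 <= k * g u + c * \sum_(j < m') g (u - j.+1)%N) ->
  forall eps, 0 < eps -> exists N, forall u, (N <= u)%N -> g u < eps.
Proof.
move=> k0 c0 hrho g0 hrec eps heps.
set rho := k + c * m'%:R.
have rho0 : 0 <= rho by rewrite /rho addr_ge0 // mulr_ge0.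
set D := \big[Num.max/0]_(u < m'.+2) g u.
have gD : forall u, (u < m'.+2)%N -> g u <= D.
  move=> u hu; exact: (le_bigmax (T := R) 0 (fun i : 'I_m'.+2 => g i) (Ordinal hu)).
have D0 : 0 <= D by apply: le_trans (gD 0%N isT); exact: g0.
have sumc : forall x : R, \sum_(j < m') x = x * m'%:R.
  by move=> x; rewrite sumr_const card_ord mulr_natr.
have step0 : forall u, g u <= D.
  elim/ltn_ind => u IH.
  case: (ltnP u m'.+2) => hu; first exact: gD.
  case: u hu IH => [//|v] hv IH.
  apply: le_trans (hrec v _) _; first by lia.
  apply: (@le_trans _ _ (k * D + c * \sum_(j < m') D)).
    apply: lerD; first by apply: ler_wpM2l => //; exact: IH.
    apply: ler_wpM2l => //; apply: ler_sum => j _; apply: IH; rewrite ltnS leq_subr //.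
  rewrite sumc.
  have hr : rho < 1 := hrho.
  have : rho * D <= D by nra.
  rewrite /rho => h; nra.
have stepq : forall q u, (q.+1 * m'.+1 <= u)%N -> g u <= D * rho ^+ q.
  elim => [|q IHq] u hu; first by rewrite expr0 mulr1.
  case: u hu => [|v] hv; first by rewrite mulSn addSn in hv.
  have hv1 : (m'.+1 <= v)%N.
    move: hv; rewrite mulSn; set P := (q.+1 * m'.+1)%N; have : (m'.+1 <= P)%N by rewrite /P mulSn leq_addr.
    lia.
  apply: le_trans (hrec v hv1) _.
  apply: (@le_trans _ _ (k * (D * rho ^+ q) + c * \sum_(j < m') (D * rho ^+ q))).
    apply: lerD.
      apply: ler_wpM2l => //; apply: IHq.
      move: hv; rewrite mulSn; set P := (q.+1 * m'.+1)%N; lia.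
    apply: ler_wpM2l => //; apply: ler_sum => j _; apply: IHq.
    move: hv; rewrite mulSn; set P := (q.+1 * m'.+1)%N; have := ltn_ord j; lia.
  rewrite sumc exprS /rho; set z := D * rho ^+ q; have : 0 <= z by rewrite /z mulr_ge0 ?exprn_ge0.
  move=> hz; rewrite /z; set w := rho ^+ q; rewrite /rho; nra.
have hlim : rho ^+ q @[q --> \oo] --> (0 : R).
  by apply: cvg_expr; rewrite ger0_norm.
have epsD : 0 < eps / (D + 1) by rewrite divr_gt0 // ltr_wpDl.
have [N _ HN] := (proj1 (cvgr0Pnorm_lt _) hlim _ epsD).
exists (N.+1 * m'.+1)%N => u hu.
apply: le_lt_trans (stepq N u hu) _.
have := HN N (leqnn N); rewrite /= ger0_norm ?exprn_ge0 // => hN.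
rewrite ltr_pdivlMr ?ltr_wpDl // in hN.
apply: le_lt_trans hN; rewrite mulrC ler_wpM2l ?exprn_ge0 // lerDl //.
Qed.
End Rec.
Section Blk.
Variable R : realType.
Variable n : nat.
Local Notation tens n1 n2 := (tensor R n1 n2 n).

Lemma tblockE n1 n2 (A : tens n1 n2) s i l :
  tblock A s i l = if (i * s <= l < i * s + s)%N then A l else 0.
Proof.
rewrite /tblock /tslice big_mkcond (bigD1 l) //= eqxx big1 ?addr0 //.
move=> j hj; rewrite eq_sym (negbTE hj); by case: ifP.
Qed.

Lemma blk_key s i l : (0 < s)%N -> (i * s <= l < i * s + s)%N = (i == l %/ s)%N.
Proof.
move=> s0; rewrite eqn_leq leq_divRL //.
have -> : (l %/ s <= i)%N = (l %/ s < i.+1)%N by [].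
by rewrite ltn_divLR // mulSn addnC.
Qed.

Lemma sum_blocks n1 n2 (A : tens n1 n2) s m :
  (0 < s)%N -> n = (m * s)%N -> \sum_(i < m) tblock A s i = A.
Proof.
move=> s0 hn; apply/funext => l; rewrite fsum.
have hl : (l %/ s < m)%N by rewrite ltn_divLR // -hn.
rewrite (bigD1 (Ordinal hl)) //= tblockE blk_key // eqxx big1 ?addr0 //.
move=> j hj; rewrite tblockE blk_key //.
case: eqP => // e; exfalso; move/eqP: hj; apply; apply: val_inj => /=; exact: e.
Qed.

End Blk.
Definition bidx m' t (j : 'I_m'.+1) : nat := nat_of_ord ((inZp t - j) : 'I_m'.+1).

Lemma idxE m' t (j : 'I_m'.+1) :
  bidx t j = ((t + m'.+1 - j) %% m'.+1)%N.
Proof. rewrite /bidx /=. by rewrite modnDml modnDmr addnBA // ltnW. Qed.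

Lemma idx_le m' t j : (j <= t)%N -> ((t + m'.+1 - j) %% m'.+1 = (t - j) %% m'.+1)%N.
Proof. by move=> h; rewrite addnC -addnBA // addnC modnDr. Qed.

Lemma reindex_idx (V : zmodType) m' t (F : nat -> V) :
  \sum_(i < m'.+1) F i = \sum_(j < m'.+1) F (bidx t j).
Proof.
rewrite (reindex_inj (h := fun j : 'I_m'.+1 => (inZp t : 'I_m'.+1) - j)) //.
by move=> x y e; apply: oppr_inj; apply: (addrI (inZp t : 'I_m'.+1)).
Qed.

Section Main.
Variable R : realType.
Variable n' : nat.
Local Notation n := n'.+1.
Local Notation tens n1 n2 := (tensor R n1 n2 n).

Definition Wt n2 n3 (X : nat -> tens n2 n3) (Xs : tens n2 n3) (t j : nat) : tens n2 n3 :=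
  (if (j <= t)%N then X (t - j)%N else 0) - Xs.

Lemma resid_eq n1 n2 n3 (A : tens n1 n2) (B : tens n1 n3) (Xs : tens n2 n3)
   (X : nat -> tens n2 n3) s m' t :
  (0 < s)%N -> (s %| n)%N -> (n %/ s)%N = m'.+1 -> tprod A Xs = B ->
  bcfsd_resid A B s X t =
  - \sum_(j < m'.+1) tprod (tblock A s (bidx t j)) (Wt X Xs t j).
Proof.
move=> s0 sn hm hB.
have hn : n = (m'.+1 * s)%N by rewrite -hm divnK.
rewrite /bcfsd_resid hm.
have -> : (fun k => \sum_(j < m'.+1 | (j <= t)%N)
             tprod (tblock A s ((t - j) %% m'.+1)) (X (t - j)%N) k)
        = \sum_(j < m'.+1) tprod (tblock A s (bidx t j))
                                 (if (j <= t)%N then X (t - j)%N else 0).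
  apply/funext => k; rewrite [LHS]/= fsum big_mkcond /=; apply: eq_bigr => j _.
  case: ifP => hj.
    congr (tprod (tblock A s _) _ k); rewrite -idx_le // -(idxE t j) //.
  by rewrite tprod0r.
rewrite -hB -{1}(sum_blocks A s0 hn) tprod_suml (reindex_idx m' t (fun i => tprod (tblock A s i) Xs)).
rewrite /Wt; under [X in _ = - X]eq_bigr => j _ do rewrite tprodBr.
by rewrite sumrB opprB.
Qed.

End Main.
Lemma taddE (R : realType) n n1 n2 (x y : tensor R n1 n2 n) : tadd x y = x + y.
Proof. by []. Qed.
Lemma tsubE (R : realType) n n1 n2 (x y : tensor R n1 n2 n) : tsub x y = x - y.
Proof. by []. Qed.
Lemma tscaleE (R : realType) n n1 n2 (x : tensor R n1 n2 n) a : tscale a x = a *: x.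
Proof. by []. Qed.

Lemma rearr (V : zmodType) (x a b c : V) : x + (- a - b) - c = x - c - a - b.
Proof. by rewrite !addrA [in RHS](addrAC x (-c) (-a)) [in RHS](addrAC (x - a) (-c) (-b)). Qed.

Section Main2.
Variable R : realType.
Variable n' : nat.
Local Notation n := n'.+1.
Local Notation tens n1 n2 := (tensor R n1 n2 n).

Lemma bidx0 m' t : bidx t (ord0 : 'I_m'.+1) = (t %% m'.+1)%N.
Proof. by rewrite idxE subn0 modnDr. Qed.

Lemma bidx_neq m' t (j : 'I_m') : bidx t (lift ord0 j) != (t %% m'.+1)%N.
Proof.
apply/negP => /eqP e.
have e2 : ((inZp t - lift ord0 j) : 'I_m'.+1) = inZp t by apply: val_inj; exact: e.
have : lift ord0 j = (0 : 'I_m'.+1).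
  apply: oppr_inj; rewrite oppr0; apply: (addrI (inZp t : 'I_m'.+1)); by rewrite e2 addr0.
move/eqP; rewrite eq_sym; apply/negP; exact: neq_lift.
Qed.

Lemma err_step n1 n2 n3 (A : tens n1 n2) (B : tens n1 n3) (Xs : tens n2 n3)
   (X : nat -> tens n2 n3) s m' alpha t :
  (0 < s)%N -> (s %| n)%N -> (n %/ s)%N = m'.+1 -> tprod A Xs = B ->
  bcfsd_iterates A B s alpha X ->
  X t.+1 - Xs =
  tprod (tsub (tid R n2) (tscale alpha (tprod (ttr (tblock A s (t %% m'.+1))) (tblock A s (t %% m'.+1)))))
        (X t - Xs)
  - alpha *: \sum_(j < m') tprod (tprod (ttr (tblock A s (t %% m'.+1))) (tblock A s (bidx t (lift ord0 j))))
                             (Wt X Xs t (lift ord0 j)).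
Proof.
move=> s0 sn hm hB [_ hX].
rewrite hX hm (resid_eq X t s0 sn hm hB) tprodNr tprod_sumr.
under eq_bigr => j _ do rewrite tprodA.
rewrite big_ord_recl bidx0.
have -> : Wt X Xs t (ord0 : 'I_m'.+1) = X t - Xs by rewrite /Wt /= subn0.
rewrite taddE tsubE tscaleE tprodBl tid_l tprodZl.
set S := \sum_(i < m') _.
set E := X t - Xs.
rewrite scalerN scalerDr opprD /E.
exact: rearr.
Qed.
End Main2.
Section Main3.
Variable R : realType.
Variable n' : nat.
Local Notation n := n'.+1.
Local Notation tens n1 n2 := (tensor R n1 n2 n).

Lemma err_bound n1 n2 n3 (A : tens n1 n2) (B : tens n1 n3) (Xs : tens n2 n3)
   (X : nat -> tens n2 n3) s m' alpha t (ka mu0 : R) :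
  (0 < s)%N -> (s %| n)%N -> (n %/ s)%N = m'.+1 -> tprod A Xs = B ->
  bcfsd_iterates A B s alpha X -> 0 <= alpha ->
  (forall i, (i < m'.+1)%N ->
     opnorm (tsub (tid R n2) (tscale alpha (tprod (ttr (tblock A s i)) (tblock A s i)))) <= ka) ->
  (forall i j, (i < m'.+1)%N -> (j < m'.+1)%N -> i != j ->
     opnorm (tprod (ttr (tblock A s i)) (tblock A s j)) <= mu0) ->
  frob (X t.+1 - Xs) <= ka * frob (X t - Xs)
     + alpha * mu0 * \sum_(j < m') frob (Wt X Xs t (lift ord0 j)).
Proof.
move=> s0 sn hm hB hit a0 Hk Hm.
rewrite (err_step t s0 sn hm hB hit).
apply: le_trans (frob_add _ _) _.
rewrite frob_opp frob_scale ger0_norm //.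
apply: lerD.
  apply: le_trans (opnorm_bound _ _) _; apply: ler_wpM2r; first exact: frob_ge0.
  by apply: Hk; rewrite ltn_pmod.
rewrite -mulrA; apply: ler_wpM2l => //.
apply: le_trans (frob_sum _ _) _; rewrite mulr_sumr; apply: ler_sum => j _.
apply: le_trans (opnorm_bound _ _) _; apply: ler_wpM2r; first exact: frob_ge0.
apply: Hm; [by rewrite ltn_pmod | exact: ltn_ord | by rewrite eq_sym bidx_neq].
Qed.

End Main3.
Lemma bigmax0_ge0 (R : realType) (I : finType) (P : pred I) (F : I -> R) :
  0 <= \big[Num.max/0]_(i | P i) F i.
Proof.
apply: (big_rec (fun x : R => 0 <= x)) => // i x _ hx.
by rewrite le_max hx orbT.
Qed.

Unset Implicit Arguments.

Theorem corollary3 (R : realType) (n1 n2 n3 n s : nat)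
  (A : tensor R n1 n2 n) (B : tensor R n1 n3 n) (Xs : tensor R n2 n3 n)
  (alpha : R) (X : nat -> tensor R n2 n3 n) :
  tprod A Xs = B ->
  (forall Y : tensor R n2 n3 n, tprod A Y = B -> Y = Xs) ->
  (2 <= n)%N -> (2 <= s)%N -> (s < n)%N -> (s %| n)%N ->
  0 < alpha ->
  kappa A s alpha + alpha * mu A s * ((n %/ s)%:R - 1) < 1 ->
  bcfsd_iterates A B s alpha X ->
  (fun t => frob (tsub (X t) Xs) ^+ 2) @ \oo --> (0 : R).
Proof.
case: n A B Xs X => [|n'] A B Xs X hB huniq h2n h2s hsn hdiv ha hk hit; first by [].
have s0 : (0 < s)%N by lia.
have [m' hm] : exists m', (n'.+1 %/ s)%N = m'.+1.
  by exists (n'.+1 %/ s).-1; rewrite prednK // divn_gt0 // ltnW.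
have Hk : forall i, (i < m'.+1)%N ->
    opnorm (tsub (tid R n2) (tscale alpha (tprod (ttr (tblock A s i)) (tblock A s i)))) <= kappa A s alpha.
  move=> i hi; rewrite -hm in hi.
  exact: (le_bigmax (T:=R) 0 (fun i : 'I_(n'.+1 %/ s) =>
     opnorm (tsub (tid R n2) (tscale alpha (tprod (ttr (tblock A s i)) (tblock A s i))))) (Ordinal hi)).
have Hm : forall i j, (i < m'.+1)%N -> (j < m'.+1)%N -> i != j ->
    opnorm (tprod (ttr (tblock A s i)) (tblock A s j)) <= mu A s.
  move=> i j hi hj hij; rewrite -hm in hi hj.
  apply: (le_trans _ (le_bigmax (T:=R) 0 (fun i : 'I_(n'.+1 %/ s) =>
     \big[Num.max/0]_(j < n'.+1 %/ s | i != j) opnorm (tprod (ttr (tblock A s i)) (tblock A s j))) (Ordinal hi))).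
  have := (le_bigmax_cond (T:=R) 0 (j := Ordinal hj) (P := fun j => Ordinal hi != j)
     (fun j : 'I_(n'.+1 %/ s) => opnorm (tprod (ttr (tblock A s (Ordinal hi))) (tblock A s j)))).
  by apply.
have k0 : 0 <= kappa A s alpha by exact: bigmax0_ge0.
have mu0 : 0 <= mu A s by exact: bigmax0_ge0.
have hr : kappa A s alpha + alpha * mu A s * m'%:R < 1.
  by move: hk; rewrite hm -natr1 addrK.
set g := fun u => if (u < m'.+1)%N then frob Xs else frob (X (u - m'.+1)%N - Xs).
have gW : forall t (j : nat), (j < m'.+1)%N -> frob (Wt X Xs t j) = g (t + m'.+1 - j)%N.
  move=> t j hj; rewrite /Wt /g; case: (leqP j t) => hjt.
    have h1 : (m'.+1 <= t + m'.+1 - j)%N by lia.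
    rewrite ltnNge h1 /=; congr (frob (X _ - Xs)); lia.
  have h1 : (t + m'.+1 - j < m'.+1)%N by lia.
  by rewrite h1 sub0r frob_opp.
have gE : forall t, frob (X t - Xs) = g (t + m'.+1)%N.
  by move=> t; rewrite /g ltnNge leq_addl /= addnK.
have g0 : forall u, 0 <= g u by move=> u; rewrite /g; case: ifP => _; exact: frob_ge0.
have grec : forall u, (m'.+1 <= u)%N ->
    g u.+1 <= kappa A s alpha * g u + alpha * mu A s * \sum_(j < m') g (u - j.+1)%N.
  move=> u hu; have [t ->] : exists t, u = (t + m'.+1)%N by exists (u - m'.+1)%N; rewrite subnK.
  rewrite -addSn -!gE.
  have -> : \sum_(j < m') g (t + m'.+1 - j.+1)%N = \sum_(j < m') frob (Wt X Xs t (lift ord0 j)).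
    by apply: eq_bigr => j _; rewrite gW ?ltn_ord // lift0.
  apply: (err_bound t s0 hdiv hm hB hit (ltW ha) Hk Hm).
have conv := rec_conv k0 (mulr_ge0 (ltW ha) mu0) hr g0 grec.
apply/cvgr0Pnorm_lt => eps heps.
have e1 : 0 < Num.min eps 1 by rewrite lt_min heps ltr01.
have [N HN] := conv _ e1.
exists N => // t /= hNt.
rewrite tsubE gE.
have := HN (t + m'.+1)%N (leq_trans hNt (leq_addr _ _)); rewrite lt_min => /andP[h1 h2].
rewrite ger0_norm ?exprn_ge0 ?g0 // expr2.
have := g0 (t + m'.+1)%N; nra.
Qed.
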